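(* Assume the hypotheses on $\mathfrak{R}$ and the discrete inf-sup condition: there exist a linear operator $\mathfrak{R}:V\to W'$ and constants $\alpha_*,M^*,\kappa>0$ with $\inf_{w\ne0}\sup_{v\neq0}\langle\mathfrak{R}v,w\rangle/(\|w\|_W\|v\|_V)\ge\alpha_*$, $\|\mathfrak{R}v\|_{W'}\le M^*\|v\|_V$ for all $v\in V$, and $\kappa\|w\|_W\le\sup_{v_\eta\in V_\eta,v_\eta\ne0}\mathcal{A}(w,v_\eta)/\|v_\eta\|_V$ for all $w\in W_\theta\cup S_\theta$. Let $\mathcal{J}:W\to\mathbb{R}$ be a functional with constants $0<c_*\le C^*$ such that $c_*\|w\|_{op,\eta}\le\mathcal{J}(w)\le C^*\|w\|_{op,\eta}$ for all $w\in W$. Let $(\tilde w^n_\theta)\subset W_\theta$ satisfy $\lim_n\mathcal{J}(u-\tilde w^n_\theta)=\inf_{w_\theta\in W_\theta}\mathcal{J}(u-w_\theta)$ and converge weakly in $W$ to $u^\flat_\theta$. Then $$\|u-u^\flat_\theta\|_W\le\Big(1+2\frac{C^*}{c_*}\frac{M^*}{\alpha_*}\frac{M}{\kappa}\Big)\inf_{w_\theta\in W_\theta}\|u-w_\theta\|_W.$$ Moreover every such minimizing sequence is bounded in $W$ and hence has a weakly convergent subsequence.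
   Context: $W$ and $V$ are reflexive separable real Banach spaces, $W'$ the dual of $W$ with duality pairing $\langle\cdot,\cdot\rangle$. $\mathcal{A}:W\times V\to\mathbb{R}$ is a bilinear form with $\mathcal{A}(w,v)\le M\|w\|_W\|v\|_V$, $\mathcal{F}:V\to\mathbb{R}$ is bounded linear, and $u\in W$ is the unique solution of $\mathcal{A}(u,v)=\mathcal{F}(v)$ for all $v\in V$. $W_\theta\subseteq W$ and $V_\eta\subseteq V$ are arbitrary subsets, $V_\eta$ containing an element of nonzero norm. For $w\in W$, $\|w\|_{op,\eta}:=\sup_{v_\eta\in V_\eta,\ \|v_\eta\|_V\neq0}\mathcal{A}(w,v_\eta)/\|v_\eta\|_V$. $S_\theta:=\{w_1-w_2:\ w_1,w_2\in W_\theta\}$. *)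

(* Defs.v *)
From HB Require Import structures.
From mathcomp Require Import all_boot all_order all_algebra.
From mathcomp Require Import all_classical all_reals all_analysis.
Set Implicit Arguments. Unset Strict Implicit. Unset Printing Implicit Defensive.
Import Order.TTheory GRing.Theory Num.Theory.
Import numFieldNormedType.Exports.
Local Open Scope classical_set_scope.
Local Open Scope ring_scope.

Section Defs.
Variable R : realType.

Definition is_clf (W : normedModType R) (f : W -> R) : Prop :=
  (forall (a : R) (x y : W), f (a *: x + y) = a * f x + f y) /\ continuous f.

Definition dual_norm (W : normedModType R) (f : W -> R) : R :=
  sup [set `|f w| / `|w| | w in [set w : W | w != 0]].

(* reflexivity: the canonical embedding W -> W'' is surjective, i.e. every
   bounded linear functional on W' is the evaluation at some w in W. *)
Definition reflexive_space (W : normedModType R) : Prop :=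
  forall Phi : (W -> R) -> R,
    (forall (a : R) (f g : W -> R), is_clf f -> is_clf g ->
       Phi (fun w => a * f w + g w) = a * Phi f + Phi g) ->
    (exists C : R, forall f, is_clf f -> `|Phi f| <= C * dual_norm f) ->
    exists w : W, forall f, is_clf f -> Phi f = f w.

Definition separable_space (W : normedModType R) : Prop :=
  exists D : set W, countable D /\ dense D.

Definition weak_cvg (W : normedModType R) (x : nat -> W) (y : W) : Prop :=
  forall f : W -> R, is_clf f -> (fun n => f (x n)) @ \oo --> f y.

Definition op_norm (W V : normedModType R) (A : W -> V -> R) (Veta : set V)
  (w : W) : R :=
  sup [set A w v / `|v| | v in [set v : V | Veta v /\ `|v| != 0]].

Definition diff_set (W : normedModType R) (Wt : set W) : set W :=
  [set w | exists w1 w2, Wt w1 /\ Wt w2 /\ w = w1 - w2].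

End Defs.

(* Main.v *)
Require Import Defs.
From HB Require Import structures.
From mathcomp Require Import all_boot all_order all_algebra.
From mathcomp Require Import all_classical all_reals all_analysis.
From mathcomp Require Import ring lra.
Import Order.TTheory GRing.Theory Num.Theory.
Import numFieldNormedType.Exports.
Local Open Scope classical_set_scope.
Local Open Scope ring_scope.

Module Helpers.
Set Implicit Arguments. Unset Strict Implicit.
Lemma clf0 (R : realType) (W : normedModType R) (f : W -> R) :
  is_clf f -> f 0 = 0.
Proof.
move=> [lf _]; have := lf 1 0 0; rewrite scale1r addr0 mul1r; lra.
Qed.

Lemma clfZ (R : realType) (W : normedModType R) (f : W -> R) a x :
  is_clf f -> f (a *: x) = a * f x.
Proof. by move=> hf; have := hf.1 a x 0; rewrite !addr0 (clf0 hf) addr0. Qed.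

Lemma clfD (R : realType) (W : normedModType R) (f : W -> R) x y :
  is_clf f -> f (x + y) = f x + f y.
Proof. by move=> hf; have := hf.1 1 x y; rewrite scale1r mul1r. Qed.

Lemma clfN (R : realType) (W : normedModType R) (f : W -> R) x :
  is_clf f -> f (- x) = - f x.
Proof. by move=> hf; rewrite -scaleN1r clfZ // mulN1r. Qed.

Lemma clfB (R : realType) (W : normedModType R) (f : W -> R) x y :
  is_clf f -> f (x - y) = f x - f y.
Proof. by move=> hf; rewrite clfD // clfN. Qed.

Lemma clf_bounded (R : realType) (W : normedModType R) (f : W -> R) :
  is_clf f -> exists C, 0 < C /\ forall x, `|f x| <= C * `|x|.
Proof.
move=> hf; have := hf.2 0; rewrite /continuous_at (clf0 hf) => /cvgr_dist_lt /(_ 1 ltr01).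
rewrite -nbhs_nearE => /nbhs_ballP [e e0 he].
exists (2 / e); split; first by rewrite divr_gt0.
move=> x; have [->|x0] := eqVneq x 0; first by rewrite (clf0 hf) !normr0 mulr0.
have nx : 0 < `|x| by rewrite normr_gt0.
set t := (e / 2 / `|x|) *: x.
have : ball 0 e t.
  rewrite -ball_normE /ball_ /= sub0r normrN normrZ.
  rewrite ger0_norm ?divr_ge0 ?ltW // divfK ?gt_eqF //.
  have e0' : 0 < e := e0; lra.
have e0' : 0 < e := e0.
have hc : 0 < e / 2 / `|x| by rewrite !divr_gt0.
move/he; rewrite /= sub0r normrN /t clfZ // normrM (gtr0_norm hc).
move=> h; rewrite -(ler_pM2l hc); apply: ltW; apply: (lt_le_trans h).
have -> : e / 2 / `|x| * (2 / e * `|x|) = 1.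
  by field; apply/andP; split; rewrite gt_eqF.
done.
Qed.

Lemma clf_dual (R : realType) (W : normedModType R) (f : W -> R) :
  is_clf f -> forall x, `|f x| <= dual_norm f * `|x|.
Proof.
move=> hf x; have [C [C0 hC]] := clf_bounded hf.
have [->|x0] := eqVneq x 0; first by rewrite (clf0 hf) !normr0 mulr0.
have nx : 0 < `|x| by rewrite normr_gt0.
rewrite -ler_pdivrMr //; apply: ub_le_sup; last by exists x.
exists C => _ [w /= w0 <-]; rewrite ler_pdivrMr ?normr_gt0 //.
Qed.

Section OpNorm.
Context (R : realType) (W V : normedModType R) (A : W -> V -> R) (M : R)
  (Veta : set V).
Hypothesis hAl : forall (a : R) (w1 w2 : W) (v : V),
  A (a *: w1 + w2) v = a * A w1 v + A w2 v.
Hypothesis hAr : forall (a : R) (w : W) (v1 v2 : V),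
  A w (a *: v1 + v2) = a * A w v1 + A w v2.
Hypothesis hM : forall w v, A w v <= M * `|w| * `|v|.
Hypothesis hv0 : exists v0 : V, Veta v0 /\ `|v0| != 0.

Lemma A0r w : A w 0 = 0.
Proof. have := hAr 1 w 0 0; rewrite scale1r addr0 mul1r; lra. Qed.

Lemma ANr w v : A w (- v) = - A w v.
Proof. by have := hAr (-1) w v 0; rewrite addr0 A0r addr0 scaleN1r mulN1r. Qed.

Lemma ADl w1 w2 v : A (w1 + w2) v = A w1 v + A w2 v.
Proof. by have := hAl 1 w1 w2 v; rewrite scale1r mul1r. Qed.

Lemma M_ge0 (x : W) : 0 <= M * `|x|.
Proof.
have [v0 [_ nv0]] := hv0; have p : 0 < `|v0| by rewrite lt_def nv0 normr_ge0.
have h1 := hM x v0; have := hM x (- v0); rewrite ANr normrN => h2.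
have : 0 <= M * `|x| * `|v0| by lra.
by rewrite pmulr_lge0.
Qed.

Lemma op_ub w : has_ubound [set A w v / `|v| | v in [set v : V | Veta v /\ `|v| != 0]].
Proof.
exists (M * `|w|) => _ [v [_ nv] <-]; have p : 0 < `|v| by rewrite lt_def nv normr_ge0.
by rewrite ler_pdivrMr.
Qed.

Lemma op_ne w : [set A w v / `|v| | v in [set v : V | Veta v /\ `|v| != 0]] !=set0.
Proof. by have [v0 h] := hv0; exists (A w v0 / `|v0|), v0. Qed.

Lemma op_le w : op_norm A Veta w <= M * `|w|.
Proof.
apply: ge_sup; first exact: op_ne.
move=> _ [v [_ nv] <-]; have p : 0 < `|v| by rewrite lt_def nv normr_ge0.
by rewrite ler_pdivrMr.
Qed.

Lemma op_ge w v : Veta v -> `|v| != 0 -> A w v / `|v| <= op_norm A Veta w.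
Proof. by move=> ev nv; apply: ub_le_sup; [exact: op_ub| exists v]. Qed.

Lemma op_add w1 w2 : op_norm A Veta (w1 + w2) <= op_norm A Veta w1 + op_norm A Veta w2.
Proof.
apply: ge_sup; first exact: op_ne.
move=> _ [v [ev nv] <-]; rewrite ADl mulrDl.
by apply: lerD; apply: op_ge.
Qed.

End OpNorm.

Lemma ev_lt (R : realType) (x : nat -> R) (l : \bar R) (b : R) :
  ((fun n => (x n)%:E) @ \oo --> l)%E -> (l < b%:E)%E -> \forall n \near \oo, x n < b.
Proof.
move=> hx lb; have := hx _ (open_ereal_lt' lb).
rewrite nbhs_filterE => h; near=> n.
by rewrite -lte_fin; near: n.
Unshelve. all: by end_near.
Qed.

Lemma Rf_bound (R : realType) (W V : normedModType R) (Rf : V -> W -> R) Mstar :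
  (forall v, is_clf (Rf v)) -> (forall v, dual_norm (Rf v) <= Mstar * `|v|) ->
  forall v w, `|Rf v w| <= Mstar * `|v| * `|w|.
Proof.
move=> h1 h2 v w; apply: le_trans (clf_dual (h1 v) w) _.
by apply: ler_wpM2r => //; exact: h2.
Qed.

Lemma infsup_bound (R : realType) (W V : normedModType R) (Rf : V -> W -> R) alpha
  (d : W) (b : R) :
  (alpha%:E <= ereal_inf [set ereal_sup
       [set (Rf v w / (`|w| * `|v|))%:E | v in [set v : V | (v != 0)%R]]
     | w in [set w : W | (w != 0)%R]])%E ->
  d != 0 -> (forall v, v != 0 -> Rf v d <= b * `|v|) -> alpha * `|d| <= b.
Proof.
move=> hinf d0 hb; have nd : 0 < `|d| by rewrite normr_gt0.
have h1 : (alpha%:E <= (b / `|d|)%:E)%E.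
  apply: (le_trans hinf); apply: le_trans (ereal_inf_lbound _) _.
    by exists d.
  apply: ge_ereal_sup => _ [v /= v0 <-]; rewrite lee_fin.
  have nv : 0 < `|v| by rewrite normr_gt0.
  rewrite ler_pdivrMr ?mulr_gt0 //.
  have -> : b / `|d| * (`|d| * `|v|) = b * `|v| by field; rewrite gt_eqF.
  exact: hb.
by move: h1; rewrite lee_fin ler_pdivlMr // mulrC.
Qed.

Lemma infsup_zero (R : realType) (W V : normedModType R) (Rf : V -> W -> R) alpha
  (d : W) :
  0 < alpha ->
  (alpha%:E <= ereal_inf [set ereal_sup
       [set (Rf v w / (`|w| * `|v|))%:E | v in [set v : V | (v != 0)%R]]
     | w in [set w : W | (w != 0)%R]])%E ->
  (forall v, Rf v d = 0) -> d = 0.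
Proof.
move=> a0 hinf hd; apply/eqP; apply: contraT => d0.
have hb : forall v, v != 0 -> Rf v d <= 0 * `|v| by move=> v _; rewrite hd mul0r.
have := infsup_bound hinf d0 hb.
rewrite pmulr_rle0 // normr_le0 => /eqP h; by rewrite h eqxx in d0.
Qed.

Section Lev.
Context (R : realType) (W V : normedModType R) (A : W -> V -> R) (M : R)
  (Veta : set V) (u : W) (Wt : set W) (J : W -> R) (cstar Cstar kappa : R).
Hypothesis hAl : forall (a : R) (w1 w2 : W) (v : V),
  A (a *: w1 + w2) v = a * A w1 v + A w2 v.
Hypothesis hAr : forall (a : R) (w : W) (v1 v2 : V),
  A w (a *: v1 + v2) = a * A w v1 + A w v2.
Hypothesis hM : forall w v, A w v <= M * `|w| * `|v|.
Hypothesis hv0 : exists v0 : V, Veta v0 /\ `|v0| != 0.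
Hypothesis k0 : 0 < kappa.
Hypothesis hk : forall w, (Wt `|` diff_set Wt) w -> kappa * `|w| <= op_norm A Veta w.
Hypothesis c0 : 0 < cstar.
Hypothesis cC : cstar <= Cstar.
Hypothesis hJ : forall w, cstar * op_norm A Veta w <= J w /\ J w <= Cstar * op_norm A Veta w.

Lemma Lev (y : nat -> W) : (forall n, Wt (y n)) ->
  ((fun n => (J (u - y n))%:E) @ \oo --> ereal_inf [set (J (u - w))%:E | w in Wt])%E ->
  forall w, Wt w -> forall e, 0 < e -> \forall n \near \oo,
    `|w - y n| <= (M * `|u - w| + Cstar * (M * `|u - w|) / cstar) / kappa + e.
Proof.
move=> hy hc w hw e e0.
set m := M * `|u - w|.
have m0 : 0 <= m by exact: (M_ge0 hAr hM hv0).
have C0 : 0 <= Cstar by apply: le_trans cC; exact: ltW.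
have hJw : J (u - w) <= Cstar * m.
  apply: le_trans (hJ _).2 _; apply: ler_wpM2l => //; exact: (op_le hM hv0).
have hl : (ereal_inf [set (J (u - w))%:E | w in Wt] <= (J (u - w))%:E)%E.
  by apply: ereal_inf_lbound; exists w.
have ekc : 0 < e * kappa * cstar by rewrite !mulr_gt0.
have lb : (ereal_inf [set (J (u - w))%:E | w in Wt] < (Cstar * m + e * kappa * cstar)%:E)%E.
  by apply: le_lt_trans hl _; rewrite lte_fin; lra.
have := ev_lt hc lb; apply: filterS => n hn.
have hd : diff_set Wt (w - y n) by exists w, (y n).
have k1 := hk (or_intror hd).
have k2 : op_norm A Veta (w - y n) <= op_norm A Veta (w - u) + op_norm A Veta (u - y n).
  by have := op_add hAl hM hv0 (w - u) (u - y n); rewrite addrA subrK.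
have k3 : op_norm A Veta (w - u) <= m by rewrite /m distrC; exact: (op_le hM hv0).
have k4 := (hJ (u - y n)).1.
have k5 : op_norm A Veta (u - y n) <= Cstar * m / cstar + e * kappa.
  rewrite -(ler_pM2l c0).
  have -> : cstar * (Cstar * m / cstar + e * kappa) = Cstar * m + e * kappa * cstar.
    by field; rewrite !gt_eqF.
  lra.
rewrite -(ler_pM2l k0).
have -> : kappa * ((m + Cstar * m / cstar) / kappa + e) = m + Cstar * m / cstar + kappa * e.
  by field; rewrite !gt_eqF.
lra.
Qed.


Lemma bounded_min (y : nat -> W) : (forall n, Wt (y n)) ->
  ((fun n => (J (u - y n))%:E) @ \oo --> ereal_inf [set (J (u - w))%:E | w in Wt])%E ->
  exists B, forall n, `|y n| <= B.
Proof.
move=> hy hc.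
have [N _ hN] := Lev hy hc (hy 0%N) ltr01.
set K := (M * `|u - y 0%N| + Cstar * (M * `|u - y 0%N|) / cstar) / kappa + 1 in hN.
have K0 : 0 <= K by apply: le_trans (hN N (leqnn N)).
exists (`|y 0%N| + K + \sum_(i < N) `|y i|) => n.
have s0 : 0 <= \sum_(i < N) `|y i| by apply: sumr_ge0.
case: (leqP N n) => Nn.
  have h1 := hN n Nn.
  have h2 : `|y n| <= `|y 0%N| + `|y 0%N - y n|.
    have -> : y n = y 0%N - (y 0%N - y n) by rewrite opprB addrCA subrr addr0.
    rewrite opprB addrCA subrr addr0 [X in X <= _](_ : _ = `|y 0%N - (y 0%N - y n)|).
      exact: ler_normB.
    by rewrite opprB addrCA subrr addr0.
  lra.
rewrite (bigD1 (Ordinal Nn)) //=.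
have : 0 <= \sum_(i < N | i != Ordinal Nn) `|y i| by apply: sumr_ge0.
have : 0 <= `|y 0%N| by [].
lra.
Qed.

Context (Rf : V -> W -> R) (alpha Mstar : R).
Hypothesis hRf : forall v, is_clf (Rf v).
Hypothesis hdual : forall v, dual_norm (Rf v) <= Mstar * `|v|.
Hypothesis a0 : 0 < alpha.
Hypothesis Ms0 : 0 < Mstar.
Hypothesis hinf : (alpha%:E <= ereal_inf [set ereal_sup
       [set (Rf v w / (`|w| * `|v|))%:E | v in [set v : V | (v != 0)%R]]
     | w in [set w : W | (w != 0)%R]])%E.

Lemma part1_pt (wt : nat -> W) (ub : W) : (forall n, Wt (wt n)) ->
  ((fun n => (J (u - wt n))%:E) @ \oo --> ereal_inf [set (J (u - w))%:E | w in Wt])%E ->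
  weak_cvg wt ub -> forall w, Wt w ->
  `|u - ub| <= (1 + 2 * (Cstar / cstar) * (Mstar / alpha) * (M / kappa)) * `|u - w|.
Proof.
move=> hy hc hwk w hw.
set m := M * `|u - w|; set K := (m + Cstar * m / cstar) / kappa.
have m0 : 0 <= m by exact: (M_ge0 hAr hM hv0).
have C0 : 0 <= Cstar by apply: le_trans cC; exact: ltW.
have mC : m <= Cstar * m / cstar.
  by rewrite ler_pdivlMr // mulrC; exact: ler_wpM2r.
have K0 : 0 <= K.
  apply: divr_ge0; last exact: ltW.
  by apply: addr_ge0 => //; apply: le_trans mC.
have hRv : forall v, Rf v (w - ub) <= Mstar * `|v| * K.
  move=> v; set c := Mstar * `|v|.
  have hc0 : 0 <= c by apply: mulr_ge0; [exact: ltW | exact: normr_ge0].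
  apply/ler_addgt0Pr => e e0.
  have c1 : 0 < c + 1 by lra.
  have e'0 : 0 < e / (c + 1) by rewrite divr_gt0.
  have ev := Lev hy hc hw e'0.
  have cv : (fun n => Rf v (w - wt n)) @ \oo --> Rf v (w - ub).
    have -> : (fun n => Rf v (w - wt n)) = (fun n => Rf v w - Rf v (wt n)).
      by apply/funext => n; rewrite clfB.
    rewrite clfB //; apply: cvgB; first exact: cvg_cst.
    exact: hwk _ (hRf v).
  apply: (closed_cvg [set x | x <= Mstar * `|v| * K + e] (@closed_le _ _) _ _ cv).
  apply: filterS ev => n hn /=.
  apply: le_trans (ler_norm _) _; apply: le_trans (Rf_bound hRf hdual _ _) _.
  rewrite -/c; apply: le_trans (ler_wpM2l hc0 hn) _.
  rewrite -/K mulrDr lerD2l mulrA ler_pdivrMr //; nra.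
have hd : `|w - ub| <= Mstar * K / alpha.
  have [->|d0] := eqVneq (w - ub) 0.
    rewrite normr0; apply: divr_ge0; last exact: ltW.
    by apply: mulr_ge0 => //; exact: ltW.
  rewrite ler_pdivlMr // mulrC; apply: (infsup_bound hinf d0) => v _.
  by rewrite mulrAC; exact: hRv.
apply: le_trans (ler_distD w _ _) _.
rewrite mulrDl mul1r lerD2l; apply: le_trans hd _.
have -> : Mstar * K / alpha = Mstar / alpha / kappa * (m + Cstar * m / cstar).
  by rewrite /K; field; rewrite !gt_eqF.
have -> : 2 * (Cstar / cstar) * (Mstar / alpha) * (M / kappa) * `|u - w|
   = Mstar / alpha / kappa * (2 * (Cstar * m / cstar)).
  by rewrite /m; field; rewrite !gt_eqF.
apply: ler_wpM2l; first by rewrite !divr_ge0 ?ltW.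
lra.
Qed.

End Lev.

Lemma ultra_lim_real (R : realType) (U : set_system nat) (g : nat -> R) (B : R) :
  UltraFilter U -> (forall n, `|g n| <= B) -> exists p : R, g n @[n --> U] --> p.
Proof.
move=> UU hB.
have PU : ProperFilter U by apply: ultra_proper.
have hc := @segment_compact R (- B) B.
have [p [_ cp]] : `[- B, B] `&` cluster (g @ U) !=set0.
  apply: hc; apply: (@filterS _ U _ setT); last exact: filterT.
  by move=> n _ /=; rewrite in_itv /= -ler_norml.
exists p => N /= hN.
have [//|hC] := in_ultra_setVsetC (g @^-1` N) UU.
have [x [hx1 hx2]] := cp (~` N) N hC hN.
by [].
Qed.

Lemma dual_ge0 (R : realType) (W : normedModType R) (f : W -> R) :
  is_clf f -> 0 <= dual_norm f.
Proof.
move=> hf; rewrite /dual_norm.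
set E := [set `|f w| / `|w| | w in [set w : W | w != 0]].
have [[x Ex]|E0] := pselect (E !=set0); last first.
  have -> : E = set0 by apply/seteqP; split => // x Ex; apply: E0; exists x.
  by rewrite sup0.
have [C [C0 hC]] := clf_bounded hf.
have ub : has_ubound E.
  exists C => _ [w /= w0 <-]; rewrite ler_pdivrMr ?normr_gt0 //.
apply: le_trans (ub_le_sup ub Ex).
by case: Ex => w _ <-; rewrite divr_ge0.
Qed.

Lemma weak_cluster (R : realType) (W : normedModType R) (U : set_system nat)
  (y : nat -> W) (B : R) :
  reflexive_space W -> UltraFilter U -> (forall n, `|y n| <= B) ->
  exists z : W, forall f, is_clf f -> f (y n) @[n --> U] --> f z.
Proof.
move=> hW UU hB.
have PU : ProperFilter U by apply: ultra_proper.
have FU : Filter U by apply: filter_filter.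
have B0 : 0 <= B by apply: le_trans (hB 0%N).
have hl : forall f, is_clf f -> exists p : R, f (y n) @[n --> U] --> p.
  move=> f hf; apply: (@ultra_lim_real _ _ _ (dual_norm f * B) UU) => n.
  apply: le_trans (clf_dual hf _) _; apply: ler_wpM2l; last exact: hB.
  exact: dual_ge0.
pose Phi := fun f : W -> R => lim (f (y n) @[n --> U]).
have hPhi : forall f, is_clf f -> f (y n) @[n --> U] --> Phi f.
  by move=> f hf; have [p hp] := hl f hf; rewrite /Phi (cvg_lim _ hp).
have [z hz] : exists z : W, forall f, is_clf f -> Phi f = f z.
  apply: hW.
    move=> a f g hf hg; rewrite /Phi; apply: cvg_lim => //=.
    exact: (cvgD (cvgMl_tmp (a:=a) (hPhi f hf)) (hPhi g hg)).
  exists B => f hf.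
  have h1 := cvg_norm (hPhi f hf).
  rewrite mulrC; apply: (closed_cvg [set x | x <= dual_norm f * B] (@closed_le _ _) _ _ (h1 FU)).
  apply: (@filterS _ U _ setT); last exact: filterT.
  move=> n _ /=; apply: le_trans (clf_dual hf _) _; apply: ler_wpM2l; last exact: hB.
  exact: dual_ge0.
by exists z => f hf; rewrite -hz //; exact: hPhi.
Qed.

Lemma dense_enum (R : realType) (V : normedModType R) :
  separable_space V -> exists e : nat -> V,
    forall v eps, 0 < eps -> exists j, `|v - e j| < eps.
Proof.
move=> [D [cD dD]].
have [d0 Dd0] : D !=set0.
  have [x [_ Dx]] := dD setT (ex_intro _ 0 I) openT; by exists x.
have /countable_injP [g ginj] := cD.
exists (fun n => xget d0 [set v | D v /\ g v = n]) => v eps e0.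
have [w [bw Dw]] := dD (ball v eps) (ex_intro _ v (ballxx v e0)) (ball_open v eps).
exists (g w).
have [Dx gx] : [set v | D v /\ g v = g w] (xget d0 [set v | D v /\ g v = g w]).
  by apply: (xgetPex d0 (P := [set v | D v /\ g v = g w])); exists w.
have -> : xget d0 [set v | D v /\ g v = g w] = w.
  by apply: ginj => //; rewrite inE.
by move: bw; rewrite -ball_normE.
Qed.

Fixpoint sel (nx : nat -> nat -> nat) (k : nat) : nat :=
  match k with 0%N => nx 0%N 0%N | k'.+1 => nx k (sel nx k') end.

Lemma extract (R : realType) (U : set_system nat) (h : nat -> nat -> R) (l : nat -> R) :
  UltraFilter U -> \oo `<=` U -> (forall j, h j n @[n --> U] --> l j) ->
  exists phi : nat -> nat, (forall k, (phi k < phi k.+1)%N) /\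
    forall j, h j (phi k) @[k --> \oo] --> l j.
Proof.
move=> UU hoo hl.
have PU : ProperFilter U by apply: ultra_proper.
have FU : Filter U by apply: filter_filter.
have good : forall k m, exists n, (m < n)%N /\
    forall j, (j <= k)%N -> `|l j - h j n| < k.+1%:R^-1.
  move=> k m.
  have ep : 0 < k.+1%:R^-1 :> R by rewrite invr_gt0 ltr0n.
  have hj : forall k', U [set n | forall j, (j <= k')%N -> `|l j - h j n| < k.+1%:R^-1].
    elim => [|k' IH].
      have /cvgrPdist_lt/(_ _ ep) := hl 0%N; apply: filterS => n hn j.
      by rewrite leqn0 => /eqP ->.
    have /cvgrPdist_lt/(_ _ ep) h2 := hl k'.+1.
    apply: filterS (filterI IH h2) => n [h1 h3] j; rewrite leq_eqVlt ltnS.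
    by case/orP => [/eqP ->|]; [exact: h3 | exact: h1].
  have hm : U [set n | (m < n)%N] by apply: hoo; exists m.+1 => // n.
  have [n [hn1 hn2]] := filter_ex (filterI hm (hj k)).
  by exists n.
have g2 : forall k, exists f : nat -> nat, forall m, (m < f m)%N /\
    forall j, (j <= k)%N -> `|l j - h j (f m)| < k.+1%:R^-1.
  by move=> k; have [f hf] := choice (good k); exists f.
have [nx hnx] := choice g2.
exists (sel nx); split; first by move=> k /=; exact: (hnx k.+1 (sel nx k)).1.
have hs : forall k j, (j <= k)%N -> `|l j - h j (sel nx k)| < k.+1%:R^-1.
  by case => [|k] j hj /=; [exact: (hnx 0%N 0%N).2 | exact: (hnx k.+1 _).2].
move=> j; apply/cvgrPdist_lt => eps e0.
have [K hK] := ltr_add_invr e0; rewrite add0r in hK.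
exists (maxn j K) => // k /=; rewrite geq_max => /andP [jk Kk].
apply: lt_trans (hs k j jk) _; apply: le_lt_trans hK.
rewrite lef_pV2 ?posrE ?ltr0n // ler_nat; by [].
Qed.

Lemma weak_subseq (R : realType) (W V : normedModType R) (Rf : V -> W -> R)
  (alpha Mstar : R) (y : nat -> W) (B : R) :
  reflexive_space W -> separable_space V -> (forall v, is_clf (Rf v)) ->
  (forall (a : R) (v1 v2 : V) (w : W), Rf (a *: v1 + v2) w = a * Rf v1 w + Rf v2 w) ->
  (forall v, dual_norm (Rf v) <= Mstar * `|v|) -> 0 < alpha -> 0 < Mstar ->
  (alpha%:E <= ereal_inf [set ereal_sup
       [set (Rf v w / (`|w| * `|v|))%:E | v in [set v : V | (v != 0)%R]]
     | w in [set w : W | (w != 0)%R]])%E ->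
  (forall n, `|y n| <= B) ->
  exists (phi : nat -> nat) (z : W),
    (forall n, (phi n < phi n.+1)%N) /\ weak_cvg (y \o phi) z.
Proof.
move=> hW hV hRf hlin hdual a0 Ms0 hinf hB.
have [e he] := dense_enum hV.
have [U [UU hoo]] := ultraFilterLemma eventually_filter.
have [z hz] := weak_cluster hW UU hB.
have [phi [hphi hconv]] := @extract R U (fun j n => Rf (e j) (y n))
   (fun j => Rf (e j) z) UU hoo (fun j => hz _ (hRf (e j))).
exists phi, z; split => // f hf; apply: contrapT => hnc.
have [eps [e0 heps]] : exists eps, 0 < eps /\
    ~ (\forall k \near \oo, `|f z - f (y (phi k))| < eps).
  apply: contrapT => hn; apply: hnc; apply/cvgrPdist_lt => eps e0.
  by apply: contrapT => h; apply: hn; exists eps.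
have hbad : forall N, exists k, (N <= k)%N /\ eps <= `|f z - f (y (phi k))|.
  move=> N; apply: contrapT => hn; apply: heps; exists N => // k /= Nk.
  rewrite ltNge; apply/negP => hle; apply: hn; exists k.
  by split.
pose S := fun k => eps <= `|f z - f (y (phi k))|.
pose G := [set A : set nat | exists N, forall k, (N <= k)%N -> S k -> A k].
have PG : ProperFilter G.
  apply: Build_ProperFilter_ex.
    by move=> P [N hN]; have [k [Nk Sk]] := hbad N; exists k; exact: hN.
  split.
  - by exists 0%N.
  - move=> P Q [N1 h1] [N2 h2]; exists (maxn N1 N2) => k.
    by rewrite geq_max => /andP [a b] Sk; split; [exact: h1 | exact: h2].
  - by move=> P Q PQ [N hN]; exists N => k Nk Sk; apply: PQ; exact: hN.
have [U' [UU' sGU']] := ultraFilterLemma PG.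
have PU' : ProperFilter U' by apply: ultra_proper.
have FU' : Filter U' by apply: filter_filter.
have hoo' : \oo `<=` U'.
  by move=> A [N _ hN]; apply: sGU'; exists N => k Nk _; exact: hN.
have [z' hz'] := weak_cluster hW UU' (y := y \o phi) (fun n => hB (phi n)).
have hj : forall j, Rf (e j) (z' - z) = 0.
  move=> j; rewrite clfB //; apply/eqP; rewrite subr_eq0; apply/eqP.
  have h1 := hz' _ (hRf (e j)).
  have h2 : Rf (e j) ((y \o phi) n) @[n --> U'] --> Rf (e j) z.
    by move=> N hN; apply: hoo'; exact: hconv j N hN.
  exact: (@cvg_unique _ (@norm_hausdorff _ _) _ _ _ _ h1 h2).
set d := z' - z.
have hd : forall v, Rf v d = 0.
  move=> v; apply/eqP; rewrite -normr_le0; apply/ler_addgt0Pr => eps' e'0.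
  rewrite add0r.
  set c := Mstar * `|d| + 1.
  have c0 : 0 <= Mstar * `|d| by rewrite mulr_ge0 ?normr_ge0 ?ltW.
  have c1 : 0 < c by rewrite /c; lra.
  have [j hj'] := he v (eps' / c) (divr_gt0 e'0 c1).
  have -> : Rf v d = Rf (v - e j) d + Rf (e j) d.
    by have := hlin 1 (v - e j) (e j) d; rewrite scale1r mul1r subrK.
  rewrite hj addr0; apply: le_trans (Rf_bound hRf hdual _ _) _.
  rewrite mulrAC; apply: le_trans (ler_wpM2l c0 (ltW hj')) _.
  rewrite mulrA ler_pdivrMr // /c; nra.
have z'z : z' = z.
  by apply/eqP; rewrite -subr_eq0; apply/eqP; exact: (infsup_zero a0 hinf hd).
have hf' := hz' f hf; rewrite z'z in hf'.
have /cvgrPdist_lt/(_ _ e0) hU := hf'.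
have hSU : U' S by apply: sGU'; exists 0%N.
have [k [h1 h2]] := filter_ex (filterI hU hSU).
by move: h1 h2; rewrite /S /= ltNge => /negP.
Qed.

Lemma ereal_inf_lbound_ex (R : realType) (S : set \bar R) x : S x -> (ereal_inf S <= x)%E.
Proof. by move=> Sx; apply: ereal_inf_lbound. Qed.

End Helpers.

Theorem mainTheorem6 (R : realType) (W V : completeNormedModType R)
  (A : W -> V -> R) (F : V -> R) (M : R) (u : W)
  (Wt : set W) (Veta : set V)
  (Rf : V -> W -> R) (alpha Mstar kappa : R)
  (J : W -> R) (cstar Cstar : R)
  (wt : nat -> W) (ub : W) :
  (* standing assumptions *)
  reflexive_space W -> reflexive_space V ->
  separable_space W -> separable_space V ->
  (forall (a : R) (w1 w2 : W) (v : V), A (a *: w1 + w2) v = a * A w1 v + A w2 v) ->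
  (forall (a : R) (w : W) (v1 v2 : V), A w (a *: v1 + v2) = a * A w v1 + A w v2) ->
  (forall w v, A w v <= M * `|w| * `|v|) ->
  (forall (a : R) (v1 v2 : V), F (a *: v1 + v2) = a * F v1 + F v2) ->
  (exists CF : R, forall v, `|F v| <= CF * `|v|) ->
  (forall v, A u v = F v) ->
  (forall u' : W, (forall v, A u' v = F v) -> u' = u) ->
  (exists v0 : V, Veta v0 /\ `|v0| != 0) ->
  (* hypotheses on the operator Rf : V -> W' *)
  (forall v, is_clf (Rf v)) ->
  (forall (a : R) (v1 v2 : V) (w : W), Rf (a *: v1 + v2) w = a * Rf v1 w + Rf v2 w) ->
  0 < alpha -> 0 < Mstar -> 0 < kappa ->
  (alpha%:E <= ereal_inf [set ereal_sup
       [set (Rf v w / (`|w| * `|v|))%:E | v in [set v : V | (v != 0)%R]]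
     | w in [set w : W | (w != 0)%R]])%E ->
  (forall v, dual_norm (Rf v) <= Mstar * `|v|) ->
  (forall w, (Wt `|` diff_set Wt) w -> kappa * `|w| <= op_norm A Veta w) ->
  (* the functional J *)
  0 < cstar -> cstar <= Cstar ->
  (forall w, cstar * op_norm A Veta w <= J w /\ J w <= Cstar * op_norm A Veta w) ->
  (* minimizing sequence, weakly convergent *)
  (forall n, Wt (wt n)) ->
  ((fun n => (J (u - wt n))%:E) @ \oo
     --> ereal_inf [set (J (u - w))%:E | w in Wt])%E ->
  weak_cvg wt ub ->
  ((`|u - ub|)%:E <=
     (1 + 2 * (Cstar / cstar) * (Mstar / alpha) * (M / kappa))%:E *
       ereal_inf [set (`|u - w|)%:E | w in Wt])%E
  /\
  (forall w' : nat -> W, (forall n, Wt (w' n)) ->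
     ((fun n => (J (u - w' n))%:E) @ \oo
        --> ereal_inf [set (J (u - w))%:E | w in Wt])%E ->
     (exists B : R, forall n, `|w' n| <= B) /\
     (exists (phi : nat -> nat) (z : W),
        (forall n, (phi n < phi n.+1)%N) /\ weak_cvg (w' \o phi) z)).

Proof.
move=> hWr hVr hWs hVs hAl hAr hM hFl hFb hu huniq hv0 hRf hRlin a0 Ms0 k0 hinf
  hdual hk c0 cC hJ hwt hc hweak.
have P1 := Helpers.part1_pt hAl hAr hM hv0 k0 hk c0 cC hJ hRf hdual a0 Ms0 hinf hwt hc hweak.
split.
  set coef := 1 + 2 * (Cstar / cstar) * (Mstar / alpha) * (M / kappa).
  have [M0|M0] := ltP M 0.
    have hz : forall x : W, x = 0.
      move=> x; have := Helpers.M_ge0 hAr hM hv0 x => h.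
      have nx : `|x| <= 0 by have := normr_ge0 x; nra.
      by apply/eqP; rewrite -normr_le0.
    rewrite (hz (u - ub)) normr0.
    have -> : ereal_inf [set (`|u - w|)%:E | w in Wt] = 0%E.
      apply/le_anti/andP; split.
        apply: Helpers.ereal_inf_lbound_ex; exists (wt 0%N); first exact: hwt.
        by rewrite (hz (u - wt 0%N)) normr0.
      by apply: le_ereal_inf_tmp => _ [w _ <-]; rewrite lee_fin.
    by rewrite mule0.
  have cpos : 0 < coef.
    rewrite /coef; apply: (lt_le_trans ltr01); rewrite lerDl.
    have q1 : 0 <= Cstar / cstar.
      by apply: divr_ge0; apply: ltW => //; apply: lt_le_trans cC.
    have q2 : 0 <= Mstar / alpha by apply: divr_ge0; apply: ltW.
    have q3 : 0 <= M / kappa by apply: divr_ge0 => //; apply: ltW.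
    by apply: mulr_ge0 => //; apply: mulr_ge0 => //; apply: mulr_ge0.
  have h : ((`|u - ub| / coef)%:E <= ereal_inf [set (`|u - w|)%:E | w in Wt])%E.
    apply: le_ereal_inf_tmp => _ [w hw <-]; rewrite lee_fin ler_pdivrMr // mulrC.
    exact: P1 hw.
  have := lee_wpmul2l (x := coef%:E) _ h; rewrite -EFinM mulrC divfK ?gt_eqF //.
  by apply; rewrite lee_fin ltW.
move=> w' hw' hc'.
have [B hB] := Helpers.bounded_min hAl hAr hM hv0 k0 hk c0 cC hJ hw' hc'.
split; first by exists B.
exact: (Helpers.weak_subseq hWr hVs hRf hRlin hdual a0 Ms0 hinf hB).
Qed.
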